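(* Let $n\ge 2$ and let $H_1,\dots,H_n$ be $1$-dimensional linear subspaces (lines through the origin) of $\mathbb{R}^n$ such that (i) at least two of them form an angle that is an irrational multiple of $\pi$; (ii) $H_1+\cdots+H_n=\mathbb{R}^n$; (iii) $\{H_1,\dots,H_n\}$ cannot be partitioned into two nonempty subsets such that every line in the first subset is orthogonal to every line in the second. If $E\subset S^{n-1}$ is nonempty, closed, and satisfies $R_{H_j}E=E$ for $j=1,\dots,n$, then $E=S^{n-1}$.
   Context: For a linear subspace $H$ of $\mathbb{R}^n$, $R_H$ denotes the reflection in $H$, i.e., the map $x\mapsto 2(x|H)-x$, where $x|H$ is the orthogonal projection of $x$ onto $H$. $+$ denotes Minkowski (vector) sum. $S^{n-1}$ is the unit sphere. *)

(* Defs.v *)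
From HB Require Import structures.
From mathcomp Require Import all_boot all_order all_algebra.
From mathcomp Require Import all_classical all_reals all_analysis.
Set Implicit Arguments. Unset Strict Implicit. Unset Printing Implicit Defensive.
Import Order.TTheory GRing.Theory Num.Theory.
Import numFieldNormedType.Exports.
Local Open Scope ring_scope.
Local Open Scope classical_set_scope.

Definition dotv {R : realType} {n : nat} (x y : 'rV[R]_n) : R := (x *m y^T) 0 0.

Definition normv {R : realType} {n : nat} (x : 'rV[R]_n) : R := Num.sqrt (dotv x x).

Definition sphere {R : realType} (n : nat) : set 'rV[R]_n := [set x | dotv x x = 1].

Definition line {R : realType} {n : nat} (u : 'rV[R]_n) : set 'rV[R]_n :=
  [set x | exists t : R, x = t *: u].

Definition proj_line {R : realType} {n : nat} (u x : 'rV[R]_n) : 'rV[R]_n :=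
  (dotv x u / dotv u u) *: u.

Definition refl_line {R : realType} {n : nat} (u x : 'rV[R]_n) : 'rV[R]_n :=
  2 *: proj_line u x - x.

Definition line_angle {R : realType} {n : nat} (u v : 'rV[R]_n) : R :=
  acos (`|dotv u v| / (normv u * normv v)).

Definition irrational_multiple_of_pi {R : realType} (t : R) : Prop :=
  ~ exists q : rat, t = ratr q * pi.

(* Main.v *)
Require Import Defs.
Set Warnings "-all".
Set Implicit Arguments. Unset Strict Implicit. Unset Printing Implicit Defensive.
From HB Require Import structures.
From mathcomp Require Import all_boot all_order all_algebra.
From mathcomp Require Import all_classical all_reals all_analysis.
From mathcomp Require Import ring lra zify.
Import Order.TTheory GRing.Theory Num.Theory.
Import numFieldNormedType.Exports.
Local Open Scope ring_scope.
Local Open Scope classical_set_scope.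
Section Dot.
Variables (R : realType) (n : nat).
Implicit Types (x y z w : 'rV[R]_n).
Local Notation "<< x , y >>" := (dotv x y).

Lemma dotvE x y : << x, y >> = \sum_i x 0 i * y 0 i.
Proof. by rewrite /dotv mxE; apply: eq_bigr => i _; rewrite mxE. Qed.

Lemma dotvC x y : << x, y >> = << y, x >>.
Proof. by rewrite !dotvE; apply: eq_bigr => i _; rewrite mulrC. Qed.

Lemma dotvDl x y z : << x + y, z >> = << x, z >> + << y, z >>.
Proof. by rewrite /dotv mulmxDl mxE. Qed.

Lemma dotvDr x y z : << z, x + y >> = << z, x >> + << z, y >>.
Proof. by rewrite dotvC dotvDl !(dotvC z). Qed.

Lemma dotvZl (t : R) x y : << t *: x, y >> = t * << x, y >>.
Proof. by rewrite /dotv -scalemxAl mxE. Qed.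

Lemma dotvZr (t : R) x y : << x, t *: y >> = t * << x, y >>.
Proof. by rewrite dotvC dotvZl dotvC. Qed.

Lemma dotvNl x y : << - x, y >> = - << x, y >>.
Proof. by rewrite -scaleN1r dotvZl mulN1r. Qed.

Lemma dotvNr x y : << x, - y >> = - << x, y >>.
Proof. by rewrite dotvC dotvNl dotvC. Qed.

Lemma dotvBl x y z : << x - y, z >> = << x, z >> - << y, z >>.
Proof. by rewrite dotvDl dotvNl. Qed.

Lemma dotvBr x y z : << z, x - y >> = << z, x >> - << z, y >>.
Proof. by rewrite dotvDr dotvNr. Qed.

Lemma dotv0l x : << 0, x >> = 0.
Proof. by rewrite -(scale0r 0) dotvZl mul0r. Qed.

Lemma dotv0r x : << x, 0 >> = 0.
Proof. by rewrite dotvC dotv0l. Qed.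

Lemma dotvv_ge0 x : 0 <= << x, x >>.
Proof. by rewrite dotvE; apply: sumr_ge0 => i _; rewrite -expr2 sqr_ge0. Qed.

Lemma dotvv_eq0 x : << x, x >> = 0 -> x = 0.
Proof.
rewrite dotvE => /eqP; rewrite psumr_eq0; last by move=> i _; rewrite -expr2 sqr_ge0.
move=> /allP H; apply/matrixP => i j; rewrite mxE (ord1 i).
have := H j (mem_index_enum j); rewrite -expr2 sqrf_eq0 => /eqP ->; by [].
Qed.

Lemma dotvv_gt0 x : x != 0 -> 0 < << x, x >>.
Proof.
move=> hx; rewrite lt_neqAle dotvv_ge0 andbT; apply/eqP => h.
by move: hx; rewrite (@dotvv_eq0 x (esym h)) eqxx.
Qed.

Lemma dotv_sumr (I : finType) (c : I -> R) (v : I -> 'rV[R]_n) x :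
  << x, \sum_i c i *: v i >> = \sum_i c i * << x, v i >>.
Proof.
rewrite dotvE.
under eq_bigr => k _ do rewrite summxE big_distrr /=.
rewrite exchange_big /=; apply: eq_bigr => i _.
rewrite dotvE big_distrr /=; apply: eq_bigr => k _; rewrite mxE; ring.
Qed.

End Dot.
Section Refl.
Variables (R : realType) (n : nat).
Implicit Types (x y z w u : 'rV[R]_n).
Local Notation "<< x , y >>" := (dotv x y).

Lemma reflE u x : refl_line u x = (2 * << x, u >> / << u, u >>) *: u - x.
Proof. by rewrite /refl_line /proj_line scalerA mulrA. Qed.

Lemma reflD u x y : refl_line u (x + y) = refl_line u x + refl_line u y.
Proof.
rewrite !reflE dotvDl; apply/rowP => k; rewrite !mxE.
move: (<<x,u>>) (<<y,u>>) (<<u,u>>) => a b c; ring.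
Qed.

Lemma reflZ u t x : refl_line u (t *: x) = t *: refl_line u x.
Proof.
rewrite !reflE dotvZl; apply/rowP => k; rewrite !mxE.
move: (<<x,u>>) (<<u,u>>) => a c; ring.
Qed.

Lemma reflN u x : refl_line u (- x) = - refl_line u x.
Proof. by rewrite -scaleN1r reflZ scaleN1r. Qed.

Lemma reflB u x y : refl_line u (x - y) = refl_line u x - refl_line u y.
Proof. by rewrite reflD reflN. Qed.

Lemma refl_dotu u x : u != 0 -> << refl_line u x, u >> = << x, u >>.
Proof.
move=> hu; have hc := dotvv_gt0 hu.
rewrite reflE dotvBl dotvZl; field; exact: lt0r_neq0.
Qed.

Lemma reflK u x : u != 0 -> refl_line u (refl_line u x) = x.
Proof.
move=> hu; rewrite [in LHS]reflE refl_dotu // reflE.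
apply/rowP => k; rewrite !mxE; move: (<<x,u>>) (<<u,u>>) => a c; ring.
Qed.

Lemma refl_dot u x y : u != 0 ->
  << refl_line u x, refl_line u y >> = << x, y >>.
Proof.
move=> hu; have hc := lt0r_neq0 (dotvv_gt0 hu).
rewrite !reflE !(dotvBl, dotvBr, dotvZl, dotvZr).
rewrite (dotvC u y).
move: (<<x,u>>) (<<y,u>>) (<<x,y>>) (<<u,u>>) hc => a b d c hc.
field; exact: hc.
Qed.

Lemma refl_perp u x : << x, u >> = 0 -> refl_line u x = - x.
Proof. by move=> h; rewrite reflE h mulr0 mul0r scale0r sub0r. Qed.

Lemma refl_self u : u != 0 -> refl_line u u = u.
Proof.
move=> hu; have hc := lt0r_neq0 (dotvv_gt0 hu).
rewrite reflE mulfK // scaler_nat mulr2n addrK //.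
Qed.

End Refl.
Section RealFill.
Variable R : realType.

Lemma min_le_l (x y : R) : Num.min x y <= x.
Proof. by rewrite ge_min lexx. Qed.
Lemma min_le_r (x y : R) : Num.min x y <= y.
Proof. by rewrite ge_min lexx orbT. Qed.

Lemma real_fill_up (H : set R) (r2 s c : R) : 0 < s -> s ^+ 2 + c ^+ 2 = 1 ->
  (forall k, H k -> k ^+ 2 <= r2) ->
  (forall M, M ^+ 2 <= r2 -> (forall eps, 0 < eps -> exists k, H k /\ `|k - M| < eps) -> H M) ->
  (forall k k', H k -> s ^+ 2 * k' ^+ 2 + c ^+ 2 * (k' - k) ^+ 2 <= s ^+ 2 * r2 -> H k') ->
  forall h t, H h -> t ^+ 2 <= r2 -> h <= t -> H t.
Proof.
move=> s0 sc Hb Hcl Hst h t Hh t2 ht.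
pose A := [set k | H k /\ h <= k <= t].
have A0 : A !=set0 by exists h; split => //; rewrite lexx ht.
have Aub : ubound A t by move=> k [_ /andP[]].
have hasA : has_sup A by split => //; exists t.
set M := sup A.
have hM : h <= M by apply: sup_upper_bound => //; split => //; rewrite lexx ht.
have Mt : M <= t by apply: ge_sup.
have h2 := Hb _ Hh.
have M2 : M ^+ 2 <= r2.
  have [M0|M0] := ltP M 0; first nra.
  nra.
have HM : H M.
  apply: Hcl => // eps e0.
  have [k [Hk /andP[hk kt]] Mk] := sup_adherent e0 hasA.
  exists k; split => //.
  have kM : k <= M by apply: sup_upper_bound => //; split => //; rewrite hk kt.
  move: Mk; rewrite -/M => Mk; rewrite ler0_norm ?subr_le0 //; lra.
have [Mt'|] := eqVneq M t; first by rewrite -Mt'.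
move=> MtN; have {MtN} Mlt : M < t by rewrite lt_neqAle MtN Mt.
suff [eps [e0 [et hst]]] : exists eps, 0 < eps /\ M + eps <= t /\
    s ^+ 2 * (M + eps) ^+ 2 + c ^+ 2 * (M + eps - M) ^+ 2 <= s ^+ 2 * r2.
  have HA : A (M + eps).
    split; first exact: Hst HM hst.
    by rewrite et andbT; lra.
  have := sup_upper_bound hasA HA; rewrite -/M; lra.
have c2 : c ^+ 2 = 1 - s ^+ 2 by lra.
have [Mneg|Mpos] := ltP M 0.
  exists (Num.min (t - M) (- (2 * s ^+ 2 * M))).
  have s2 : 0 < s ^+ 2 by rewrite exprn_gt0.
  have m1 := min_le_l (t - M) (- (2 * s ^+ 2 * M)).
  have m2 := min_le_r (t - M) (- (2 * s ^+ 2 * M)).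
  split; first by rewrite lt_min; apply/andP; split; nra.
  split; first lra.
  move: m1 m2 (lt_min (Num.min (t - M) (- (2 * s ^+ 2 * M))) (t - M) (- (2 * s ^+ 2 * M))).
  set e := Num.min _ _ => m1 m2 _.
  have e0 : 0 < e by rewrite lt_min; apply/andP; split; nra.
  rewrite addrAC subrr add0r c2; nra.
set D := s ^+ 2 * (r2 - M ^+ 2).
have s2 : 0 < s ^+ 2 by rewrite exprn_gt0.
have D0 : 0 < D by rewrite /D; apply: mulr_gt0 => //; nra.
set q := D / (1 + 2 * s ^+ 2 * M).
have q0 : 0 < q by rewrite /q divr_gt0 //; nra.
have qE : q * (1 + 2 * s ^+ 2 * M) = D by rewrite /q mulfVK //; apply: lt0r_neq0; nra.
pose e := Num.min 1 (Num.min (t - M) q).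
have m1 : e <= 1 by exact: min_le_l.
have m2 : e <= t - M by rewrite /e ge_min; apply/orP; right; exact: min_le_l.
have m3 : e <= q by rewrite /e ge_min; apply/orP; right; exact: min_le_r.
have e0 : 0 < e by rewrite /e !lt_min ltr01 q0 andbT; lra.
exists e; split => //; split; first lra.
have hh1 : e * e <= e * 1 by rewrite ler_pM2l.
have hh2 : e * (1 + 2 * s ^+ 2 * M) <= q * (1 + 2 * s ^+ 2 * M).
  by rewrite ler_pM2r //; nra.
rewrite /D in qE.
rewrite addrAC subrr add0r c2; nra.
Qed.

Lemma real_fill (H : set R) (r2 s c : R) : 0 < s -> s ^+ 2 + c ^+ 2 = 1 ->
  (forall k, H k -> k ^+ 2 <= r2) ->
  (forall M, M ^+ 2 <= r2 -> (forall eps, 0 < eps -> exists k, H k /\ `|k - M| < eps) -> H M) ->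
  (forall k k', H k -> s ^+ 2 * k' ^+ 2 + c ^+ 2 * (k' - k) ^+ 2 <= s ^+ 2 * r2 -> H k') ->
  forall h t, H h -> t ^+ 2 <= r2 -> H t.
Proof.
move=> s0 sc Hb Hcl Hst h t Hh t2.
have [ht|th] := leP h t; first exact: (real_fill_up s0 sc Hb Hcl Hst Hh t2 ht).
rewrite -(opprK t).
apply: (@real_fill_up (fun k => H (- k)) r2 s c s0 sc _ _ _ (- h)).
- by move=> k /Hb; rewrite sqrrN.
- move=> M M2 HM; apply: Hcl; first by rewrite sqrrN.
  move=> eps /HM [k [Hk kM]]; exists (- k); split => //.
  by rewrite -opprD normrN.
- move=> k k' Hk hk; apply: (Hst _ _ Hk).
  by rewrite sqrrN -opprD sqrrN.
- by rewrite opprK.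
- by rewrite sqrrN.
- lra.
Qed.

End RealFill.
Section Clos.
Variables (R : realType) (n : nat).

Lemma closed_limit (E : set 'rV[R]_n) (f : R -> 'rV[R]_n) (M : R) :
  closed E -> {for M, continuous f} ->
  (forall eps, 0 < eps -> exists k, E (f k) /\ `|k - M| < eps) -> E (f M).
Proof.
move=> cE cf H; apply: cE => B /cf.
move=> /nbhs_ballP [e /= e0 he].
have [k [Ek kM]] := H e e0.
exists (f k); split => //; apply: he.
by rewrite /ball /= distrC.
Qed.

End Clos.
Section Cont.
Variables (R : realType) (n : nat).

Lemma cont_Q (z a e : 'rV[R]_n) (r2 : R) :
  continuous (fun k : R => z + Num.sqrt (r2 - k ^+ 2) *: a + k *: e).
Proof.
move=> M.
have h1 : {for M, continuous (fun k : R => r2 - k ^+ 2)}.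
  apply: cvgB; first exact: cvg_cst.
  under eq_fun do rewrite expr2.
  by rewrite expr2; apply: cvgM; exact: cvg_id.
have h2 := continuous_comp h1 (@sqrt_continuous R _).
have h3 : {for M, continuous (fun k : R => Num.sqrt (r2 - k ^+ 2) *: a)}.
  exact: (cvgZ h2 (cvg_cst a)).
have h4 : {for M, continuous (fun k : R => k *: e)}.
  exact: (cvgZ cvg_id (cvg_cst e)).
have h5 : {for M, continuous (fun k : R => z + Num.sqrt (r2 - k ^+ 2) *: a)}.
  exact: (cvgD (cvg_cst z) h3).
exact: (cvgD h5 h4).
Qed.

End Cont.
Definition subsp {R : realType} {n : nat} (U : set 'rV[R]_n) :=
  [/\ U 0, (forall x y, U x -> U y -> U (x + y)) & (forall (t : R) x, U x -> U (t *: x))].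
Definition hasproj {R : realType} {n : nat} (U : set 'rV[R]_n) :=
  forall x, exists q, U q /\ forall w, U w -> dotv (x - q) w = 0.
Definition symm {R : realType} {n : nat} (U E : set 'rV[R]_n) :=
  forall x y, E x -> U (y - x) -> dotv y y = dotv x x -> E y.
Definition addline {R : realType} {n : nat} (U : set 'rV[R]_n) (u : 'rV[R]_n) :=
  fun v => exists w (t : R), U w /\ v = w + t *: u.

Section Merge.
Variables (R : realType) (n : nat).
Implicit Types (x y z w u v : 'rV[R]_n) (U E : set 'rV[R]_n).
Local Notation "<< x , y >>" := (dotv x y).

Lemma subspN U x : subsp U -> U x -> U (- x).
Proof. by case=> _ _ hZ hx; rewrite -scaleN1r; apply: hZ. Qed.

Lemma subspB U x y : subsp U -> U x -> U y -> U (x - y).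
Proof. move=> hU hx hy; case: (hU) => _ hD _; apply: hD => //; exact: subspN. Qed.

Lemma subspL U x y (a b : R) : subsp U -> U x -> U y -> U (a *: x + b *: y).
Proof. by case=> _ hD hZ hx hy; apply: hD; apply: hZ. Qed.

Lemma normalize x : x != 0 -> exists k : R, 0 < k /\ << k *: x, k *: x >> = 1.
Proof.
move=> hx; have hp := dotvv_gt0 hx.
exists (Num.sqrt << x, x >>)^-1; split; first by rewrite invr_gt0 sqrtr_gt0.
rewrite dotvZl dotvZr mulrA -expr2 exprVn sqr_sqrtr ?ltW // mulVf //.
exact: lt0r_neq0.
Qed.

Lemma norm3 z v e (k : R) : << z, v >> = 0 -> << z, e >> = 0 -> << v, e >> = 0 ->
  << e, e >> = 1 ->
  << z + v + k *: e, z + v + k *: e >> = << z, z >> + << v, v >> + k ^+ 2.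
Proof.
move=> zv ze ve ee.
rewrite !(dotvDl, dotvDr, dotvZl, dotvZr) (dotvC v z) (dotvC e z) (dotvC e v) zv ze ve ee.
ring.
Qed.

Lemma symm_sub U V E : (forall v, V v -> U v) -> symm U E -> symm V E.
Proof. by move=> hVU hU x y Ex /hVU; apply: hU. Qed.

End Merge.
Section Merge2.
Variables (R : realType) (n : nat).
Implicit Types (x y z w u v : 'rV[R]_n) (U E : set 'rV[R]_n).
Local Notation "<< x , y >>" := (dotv x y).

Lemma merge U E u : subsp U -> hasproj U -> symm U E -> closed E ->
  (forall x, E x -> E (refl_line u x)) -> u != 0 ->
  (exists w, U w /\ << u, w >> != 0) ->
  (forall f, exists a, U a /\ a != 0 /\ << a, f >> = 0) ->
  symm (addline U u) E.
Proof.
move=> hU hP hS cE hR hu [w0 [Uw0 uw0]] hdim.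
have [U0 hD hZ] := hU.
have [p [Up hp]] := hP u.
set e0 := u - p.
have [e00|e0N] := eqVneq e0 0.
  apply: symm_sub hS => v [w [t [Uw ->]]].
  have -> : u = p by apply/eqP; rewrite -subr_eq0 -/e0 e00.
  by apply: (hD) => //; apply: (hZ).
have pN : p != 0.
  apply/eqP => p0; move: uw0; have := hp _ Uw0; rewrite p0 subr0 => ->; by rewrite eqxx.
have [a [Ua [aN ap]]] := hdim p.
have [kp [kp0 ff]] := normalize pN.
have [ke [ke0 ee]] := normalize e0N.
have [ka [ka0 bb]] := normalize aN.
set f := kp *: p. set e := ke *: e0. set b := ka *: a.
rewrite -/f in ff; rewrite -/e in ee; rewrite -/b in bb.
have Uf : U f by exact: hZ.
have Ub : U b by exact: hZ.
have eU : forall w, U w -> << e, w >> = 0 by move=> w Uw; rewrite dotvZl hp // mulr0.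
have wE : forall w, U w -> << w, e >> = 0 by move=> w Uw; rewrite dotvC eU.
have fe := wE _ Uf. have hbe := wE _ Ub.
have bf : << b, f >> = 0 by rewrite dotvZl dotvZr ap !mulr0.
pose al := kp^-1. pose bt := ke^-1.
have al0 : 0 < al by rewrite invr_gt0.
have bt0 : 0 < bt by rewrite invr_gt0.
have udec : u = al *: f + bt *: e.
  rewrite /f /e !scalerA !mulVf ?lt0r_neq0 // !scale1r /e0.
  by rewrite [p + _]addrC subrK.
clearbody f e b.
have fu : << f, u >> = al by rewrite udec dotvDr !dotvZr ff fe; ring.
have eu : << e, u >> = bt by rewrite udec dotvDr !dotvZr (dotvC e f) fe ee; ring.
have bu : << b, u >> = 0 by rewrite udec dotvDr !dotvZr bf hbe; ring.
set N := al ^+ 2 + bt ^+ 2.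
have N0 : 0 < N by rewrite /N; apply: addr_gt0; apply: exprn_gt0.
have N0' : N != 0 by exact: lt0r_neq0.
have uu : << u, u >> = N.
  by rewrite [in X in << X, _ >>]udec dotvDl !dotvZl fu eu /N; ring.
set c2 := (al ^+ 2 - bt ^+ 2) / N. set s2 := 2 * al * bt / N.
have Rf : refl_line u f = c2 *: f + s2 *: e.
  rewrite reflE fu uu udec; apply/rowP => k; rewrite !mxE /c2 /s2.
  move: (f 0 k) (e 0 k) N0' => F G N0'.
  rewrite /N in N0' *; by field.
have Rb : refl_line u b = - b by apply: refl_perp; rewrite bu.
have sc : s2 ^+ 2 + c2 ^+ 2 = 1.
  have N1 : al ^+ 2 + bt ^+ 2 != 0 := N0'.
  by rewrite /s2 /c2 /N; field.
have s20 : 0 < s2 by rewrite /s2; apply: divr_gt0 => //; apply: mulr_gt0 => //; lra.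
move=> x y Ex [w [t [Uw hyx]]] nyx.
have [qx [Uqx hqx]] := hP x.
set h := << x, e >>.
set z := x - qx - h *: e.
have zU : forall v, U v -> << z, v >> = 0.
  by move=> v Uv; rewrite /z dotvBl hqx // dotvZl eU // mulr0 subrr.
have ze : << z, e >> = 0.
  by rewrite /z !dotvBl dotvZl ee mulr1 (wE qx) // subr0 /h subrr.
have N3 : forall v k, U v ->
    << z + v + k *: e, z + v + k *: e >> = << z, z >> + << v, v >> + k ^+ 2.
  by move=> v k Uv; apply: norm3; [exact: zU | exact: ze | exact: wE | exact: ee].
set r2 := << x, x >> - << z, z >>.
pose Q k := z + Num.sqrt (r2 - k ^+ 2) *: b + k *: e.
pose H := fun k => k ^+ 2 <= r2 /\ E (Q k).
have nQ : forall k, k ^+ 2 <= r2 -> << Q k, Q k >> = << x, x >>.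
  move=> k k2; rewrite /Q N3; last exact: hZ.
  rewrite dotvZl dotvZr bb mulr1 -expr2 sqr_sqrtr ?subr_ge0 // /r2; ring.
have K1 : forall v k, U v -> << z + v + k *: e, z + v + k *: e >> = << x, x >> ->
    (E (z + v + k *: e) <-> H k).
  move=> v k Uv nv.
  have nv' := nv; rewrite N3 // in nv'.
  have k2 : k ^+ 2 <= r2 by have := dotvv_ge0 v; rewrite /r2 -nv'; lra.
  have Ud : U (Q k - (z + v + k *: e)).
    have -> : Q k - (z + v + k *: e) = Num.sqrt (r2 - k ^+ 2) *: b - v.
      by rewrite /Q; apply/rowP => i; rewrite !mxE; ring.
    by apply: subspB => //; apply: (hZ).
  split.
  - move=> Ez; split => //; apply: (hS _ _ Ez Ud); by rewrite nQ.
  - case=> _ EQ; apply: (hS _ _ EQ); last by rewrite nv nQ.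
    by rewrite -opprB; apply: subspN.
have xform : x = z + qx + h *: e by rewrite /z; apply/rowP => i; rewrite !mxE; ring.
have Hh : H h by apply/(K1 qx h Uqx); rewrite -xform.
set vy := qx + w + (t * al) *: f.
set ky := h + t * bt.
have yform : y = z + vy + ky *: e.
  have -> : y = x + (y - x) by rewrite addrC subrK.
  rewrite hyx {1}xform udec /vy /ky; apply/rowP => i; rewrite !mxE; ring.

have Uvy : U vy by apply: (hD); [apply: (hD) | apply: (hZ)].
have ny : << z + vy + ky *: e, z + vy + ky *: e >> = << x, x >> by rewrite -yform.
rewrite yform; apply/(K1 _ _ Uvy ny).
apply: (@real_fill R H r2 s2 c2 s20 sc _ _ _ h ky Hh).
- by move=> k; rewrite /H; case.
- move=> M M2 HM; rewrite /H; split => //.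
  have := @closed_limit R n E (fun k => z + Num.sqrt (r2 - k ^+ 2) *: b + k *: e) M cE
    (@cont_Q R n z b e r2 M).
  apply => eps /HM [k []]; rewrite /H => -[_ EQk] kM; exists k; split => //.
- move=> k k'; rewrite /H => -[k2 EQ] hst.
  set mu := (k' - k) / s2.
  have hmu : mu * s2 = k' - k by rewrite /mu mulfVK // lt0r_neq0.
  set L2 := r2 - k' ^+ 2 - (mu * c2) ^+ 2.
  have L20 : 0 <= L2.
    have h0 : 0 <= s2 ^+ 2 * L2.
      rewrite /L2; move: hst; rewrite -hmu; nra.
    by rewrite pmulr_rge0 // in h0; apply: exprn_gt0.
  set L := Num.sqrt L2.
  have L2E : L ^+ 2 = L2 by rewrite sqr_sqrtr.
  set v' := L *: b + (mu * c2) *: f.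
  have Uv' : U v' by apply: (hD); apply: (hZ).
  have vv' : << v', v' >> = L ^+ 2 + (mu * c2) ^+ 2.
    rewrite /v' !(dotvDl, dotvDr, dotvZl, dotvZr) bb ff bf (dotvC f b) bf; ring.
  have nv' : << z + v' + k' *: e, z + v' + k' *: e >> = << x, x >>.
    rewrite N3 // vv' L2E /L2 /r2; ring.
  apply/(K1 _ _ Uv' nv').
  set q := Q k. set q'' := z + v' + k' *: e.
  set sq := Num.sqrt (r2 - k ^+ 2).
  have Rq : E (refl_line u q) := hR _ EQ.
  have nqq : << q, q >> = << x, x >> := nQ k k2.
  have dq : q'' - q = (L - sq) *: b + mu *: refl_line u f.
    have k'E : k' = k + mu * s2 by rewrite hmu; ring.
    rewrite Rf /q'' /v' /q /Q -/sq k'E; apply/rowP => i; rewrite !mxE; ring.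
  have Ud : U (refl_line u q'' - refl_line u q).
    rewrite -reflB dq reflD !reflZ Rb reflK //.
    by apply: (hD); apply: (hZ) => //; apply: subspN.
  have Eq'' : E (refl_line u q'').
    by apply: (hS _ _ Rq Ud); rewrite !refl_dot // nqq nv'.
  by have := hR _ Eq''; rewrite reflK.
- have := dotvv_ge0 vy; rewrite N3 // in ny; rewrite /r2; lra.
Qed.

End Merge2.
Section Density.
Variable R : realType.

Definition Gset (a b : R) := fun th : R => exists k l : int, th = k%:~R * a + l%:~R * b.

Lemma GsetB a b x y : Gset a b x -> Gset a b y -> Gset a b (x - y).
Proof.
move=> [k [l ->]] [k' [l' ->]]; exists (k - k'), (l - l').
rewrite !intrB; ring.
Qed.

Lemma GsetM a b x (m : int) : Gset a b x -> Gset a b (m%:~R * x).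
Proof.
move=> [k [l ->]]; exists (m * k), (m * l).
rewrite !intrM; ring.
Qed.

Lemma Gset_small a b : 0 < b -> (forall K N : int, N != 0 -> N%:~R * a != K%:~R * b) ->
  forall eps, 0 < eps -> exists g, Gset a b g /\ 0 < g < eps.
Proof.
move=> b0 irr eps0 e0.
apply: contrapT => hno.
have hno' : forall g, Gset a b g -> 0 < g -> eps0 <= g.
  move=> g Gg g0; rewrite leNgt; apply/negP => ge; apply: hno; exists g.
  by split => //; rewrite g0 ge.
pose P := fun g => Gset a b g /\ 0 < g.
have Pb : P b by split => //; exists 0, 1; rewrite mul0r add0r mul1r.
have P0 : P !=set0 by exists b.
have lbP : lbound P eps0 by move=> g [Gg g0]; exact: hno' Gg g0.
have hinf : has_inf P by split => //; exists eps0.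
set m := inf P.
have em : eps0 <= m by apply: lb_le_inf.
have m0 : 0 < m by exact: (lt_le_trans e0 em).
have lbm : forall g, P g -> m <= g.
  by move=> g Pg; case: hinf => _ hl; exact: (ge_inf hl Pg).
have Pm : P m.
  have [g1 Pg1 g1m] := inf_adherent m0 hinf; rewrite -/m in g1m.
  have [g1E|g1N] := eqVneq g1 m; first by rewrite -g1E.
  have mg1 : m < g1 by rewrite lt_neqAle eq_sym g1N lbm.
  have d0 : 0 < g1 - m by rewrite subr_gt0.
  have [g2 Pg2 g2m] := inf_adherent d0 hinf; rewrite -/m in g2m.
  have mg2 := lbm _ Pg2.
  have Pd : P (g1 - g2).
    split; first by apply: GsetB; [case: Pg1 | case: Pg2].
    by rewrite subr_gt0; lra.
  have := lbm _ Pd; lra.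
have mult : forall g, Gset a b g -> g = (Num.floor (g / m))%:~R * m.
  move=> g Gg; set k := Num.floor (g / m).
  have r0 : 0 <= g - k%:~R * m.
    by rewrite subr_ge0 -ler_pdivlMr // floor_le.
  have r1 : g - k%:~R * m < m.
    have := floorD1_gt (g / m); rewrite -/k intrD ltr_pdivrMr // => H.
    rewrite mulrDl ?rmorph1 mul1r in H; lra.
  have Gr : Gset a b (g - k%:~R * m).
    by apply: GsetB => //; apply: GsetM; case: Pm.
  have [rE|rN] := eqVneq (g - k%:~R * m) 0; first by apply/eqP; rewrite -subr_eq0 rE.
  have rP : P (g - k%:~R * m) by split => //; rewrite lt_neqAle eq_sym rN r0.
  by have := lbm _ rP; lra.
have Ga : Gset a b a by exists 1, 0; rewrite mul0r addr0 mul1r.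
have Gb : Gset a b b by exists 0, 1; rewrite mul0r add0r mul1r.
have aE := mult _ Ga; have bE := mult _ Gb.
set Na := Num.floor (a / m) in aE. set Nb := Num.floor (b / m) in bE.
have Nb0 : Nb != 0.
  apply/eqP => Nb0; move: bE; rewrite Nb0 mul0r => b00; move: b0; rewrite b00 ltxx //.
have := irr Na Nb Nb0; rewrite aE bE.
by rewrite !mulrA [Nb%:~R * _]mulrC eqxx.
Qed.

Lemma Gset_dense a b : 0 < b -> (forall K N : int, N != 0 -> N%:~R * a != K%:~R * b) ->
  forall al eps, 0 < eps -> exists th, Gset a b th /\ `|th - al| < eps.
Proof.
move=> b0 irr al eps e0.
have [g [Gg /andP[g0 ge]]] := Gset_small b0 irr e0.
set k := Num.floor (al / g).
exists (k%:~R * g); split; first exact: GsetM.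
have h1 : k%:~R * g <= al by rewrite -ler_pdivlMr // floor_le.
have h2 : al < (k + 1)%:~R * g.
  by rewrite -ltr_pdivrMr // floorD1_gt.
rewrite intrD mulrDl mul1r in h2.
rewrite ler0_norm ?subr_le0 //; lra.
Qed.

End Density.
Definition rotCS {R : realType} {n : nat} (p1 p2 : 'rV[R]_n) (C S : R) (x : 'rV[R]_n) :=
  x + ((C - 1) * dotv x p1 - S * dotv x p2) *: p1
    + (S * dotv x p1 + (C - 1) * dotv x p2) *: p2.

Section Rot.
Variables (R : realType) (n : nat).
Implicit Types (x y z w u v p : 'rV[R]_n) (E : set 'rV[R]_n).
Local Notation "<< x , y >>" := (dotv x y).

Lemma rot_p1 p1 p2 C S x : << p1, p1 >> = 1 -> << p2, p2 >> = 1 -> << p1, p2 >> = 0 ->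
  << rotCS p1 p2 C S x, p1 >> = C * << x, p1 >> - S * << x, p2 >>.
Proof.
move=> h11 h22 h12; rewrite /rotCS !dotvDl !dotvZl h11 (dotvC p2 p1) h12; ring.
Qed.

Lemma rot_p2 p1 p2 C S x : << p1, p1 >> = 1 -> << p2, p2 >> = 1 -> << p1, p2 >> = 0 ->
  << rotCS p1 p2 C S x, p2 >> = S * << x, p1 >> + C * << x, p2 >>.
Proof.
move=> h11 h22 h12; rewrite /rotCS !dotvDl !dotvZl h22 h12; ring.
Qed.

Lemma rot_comp p1 p2 C S C' S' x : << p1, p1 >> = 1 -> << p2, p2 >> = 1 -> << p1, p2 >> = 0 ->
  rotCS p1 p2 C S (rotCS p1 p2 C' S' x) = rotCS p1 p2 (C * C' - S * S') (S * C' + C * S') x.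
Proof.
move=> h11 h22 h12.
rewrite [X in X = _]/rotCS rot_p1 // rot_p2 // /rotCS.
apply/rowP => i; rewrite !mxE.
move: (<< x, p1 >>) (<< x, p2 >>) => X1 X2; ring.
Qed.

Lemma rot_id p1 p2 x : rotCS p1 p2 1 0 x = x.
Proof. by rewrite /rotCS subrr !mul0r !subr0 !add0r !scale0r !addr0. Qed.

Lemma rot_cont p1 p2 x : continuous (fun th : R => rotCS p1 p2 (cos th) (sin th) x).
Proof.
move=> M.
have hc : {for M, continuous (fun th : R => cos th - 1)}.
  exact: (cvgB (@continuous_cos R M) (cvg_cst (1 : R))).
have hs := @continuous_sin R M.
have h1 : {for M, continuous (fun th : R => (cos th - 1) * << x, p1 >> - sin th * << x, p2 >>)}.
  exact: (cvgB (cvgM hc (cvg_cst _)) (cvgM hs (cvg_cst _))).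
have h2 : {for M, continuous (fun th : R => sin th * << x, p1 >> + (cos th - 1) * << x, p2 >>)}.
  exact: (cvgD (cvgM hs (cvg_cst _)) (cvgM hc (cvg_cst _))).
exact: (cvgD (cvgD (cvg_cst x) (cvgZ h1 (cvg_cst p1))) (cvgZ h2 (cvg_cst p2))).
Qed.

Lemma angle_exists (C S : R) : C ^+ 2 + S ^+ 2 = 1 -> exists th, cos th = C /\ sin th = S.
Proof.
move=> hCS.
have hC' : -1 <= C <= 1 by apply/andP; split; nra.
have cC : cos (acos C) = C by apply: acosK; rewrite in_itv /= hC'.
have s2 : 1 - C ^+ 2 = S ^+ 2 by lra.
have [S0|S0] := leP 0 S.
  exists (acos C); split; first exact: cC.
  by rewrite sin_acos // s2 sqrtr_sqr ger0_norm.
exists (- acos C); split; first by rewrite cosN.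
by rewrite sinN sin_acos // s2 sqrtr_sqr ltr0_norm ?opprK.
Qed.

Lemma int_closed (A : set R) (g : R) : A 0 -> (forall a b : R, A a -> A b -> A (a + b)) ->
  A g -> A (- g) -> forall k : int, A (k%:~R * g).
Proof.
move=> A0 AD Ag Ang.
have aux : forall h, A h -> forall m : nat, A (m%:R * h).
  move=> h Ah; elim=> [|m IH]; first by rewrite mul0r.
  by rewrite -addn1 natrD mulrDl mul1r; apply: AD.
case=> m; first by rewrite -pmulrn; exact: aux.
by rewrite NegzE intrN mulNr -mulrN; apply: aux.
Qed.

End Rot.
Section PlaneSym.
Variables (R : realType) (n : nat).
Implicit Types (x y z w u v : 'rV[R]_n) (E : set 'rV[R]_n).
Local Notation "<< x , y >>" := (dotv x y).

Lemma plane_sym E (p1 p2 : 'rV[R]_n) (om : R) :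
  << p1, p1 >> = 1 -> << p2, p2 >> = 1 -> << p1, p2 >> = 0 -> closed E ->
  (forall x, E x -> E (rotCS p1 p2 (cos (2 * om)) (sin (2 * om)) x)) ->
  (forall x, E x -> E (rotCS p1 p2 (cos (- (2 * om))) (sin (- (2 * om))) x)) ->
  (forall K N : int, N != 0 -> N%:~R * (2 * om) != K%:~R * (pi *+ 2)) ->
  symm (fun v => exists d1 d2 : R, v = d1 *: p1 + d2 *: p2) E.
Proof.
move=> h11 h22 h12 cE Hp Hm irr.
pose A := fun th : R => forall x, E x -> E (rotCS p1 p2 (cos th) (sin th) x).
have AD : forall a b : R, A a -> A b -> A (a + b).
  move=> a b Aa Ab x Ex; rewrite cosD sinD.
  by have := Aa _ (Ab _ Ex); rewrite rot_comp.
have A0 : A 0 by move=> x Ex; rewrite cos0 sin0 rot_id.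
have A2 : A (pi *+ 2) by move=> x Ex; rewrite cos2pi sin2pi rot_id.
have A2' : A (- (pi *+ 2)) by move=> x Ex; rewrite cosN sinN cos2pi sin2pi oppr0 rot_id.
have AG : forall th, Gset (2 * om) (pi *+ 2) th -> A th.
  move=> th [k [l ->]]; apply: (AD).
  - exact: (int_closed A0 AD Hp Hm).
  - exact: (int_closed A0 AD A2 A2').
have pi2 : 0 < pi *+ 2 :> R by rewrite mulrn_wgt0 // pi_gt0.
have Aall : forall th, A th.
  move=> th x Ex.
  have := @closed_limit R n E (fun t => rotCS p1 p2 (cos t) (sin t) x) th cE (@rot_cont R n p1 p2 x th).
  apply => eps e0.
  have [t [Gt tth]] := Gset_dense pi2 irr th e0.
  by exists t; split => //; apply: AG.
move=> x y Ex [d1 [d2 hd]] nyx.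
set X1 := << x, p1 >>. set X2 := << x, p2 >>.
set xp := x - X1 *: p1 - X2 *: p2.
have xp1 : << xp, p1 >> = 0 by rewrite /xp !dotvBl !dotvZl h11 (dotvC p2 p1) h12 /X1; ring.
have xp2 : << xp, p2 >> = 0 by rewrite /xp !dotvBl !dotvZl h22 h12 /X2; ring.
have xf : x = xp + X1 *: p1 + X2 *: p2 by rewrite /xp; apply/rowP => i; rewrite !mxE; ring.
have yf : y = xp + (X1 + d1) *: p1 + (X2 + d2) *: p2.
  have -> : y = x + (y - x) by rewrite addrC subrK.
  by rewrite hd {1}xf; apply/rowP => i; rewrite !mxE; ring.
have nrm : forall a b : R, << xp + a *: p1 + b *: p2, xp + a *: p1 + b *: p2 >> =
    << xp, xp >> + a ^+ 2 + b ^+ 2.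
  move=> a b; rewrite norm3; last 4 first.
  - by rewrite dotvZr xp1 mulr0.
  - exact: xp2.
  - by rewrite dotvZl h12 mulr0.
  - exact: h22.
  by rewrite dotvZl dotvZr h11 mulr1 -expr2.
set Y1 := X1 + d1 in yf. set Y2 := X2 + d2 in yf.
have hr : Y1 ^+ 2 + Y2 ^+ 2 = X1 ^+ 2 + X2 ^+ 2.
  by move: nyx; rewrite {1 2}yf {1 2}xf !nrm; lra.
set r := X1 ^+ 2 + X2 ^+ 2 in hr.
have [r0|rN] := eqVneq r 0.
  have hX1 : X1 = 0 by apply/eqP; rewrite -sqrf_eq0; apply/eqP; move: r0; rewrite /r; nra.
  have hX2 : X2 = 0 by apply/eqP; rewrite -sqrf_eq0; apply/eqP; move: r0; rewrite /r; nra.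
  have hY1 : Y1 = 0 by apply/eqP; rewrite -sqrf_eq0; apply/eqP; move: r0 hr; rewrite /r; nra.
  have hY2 : Y2 = 0 by apply/eqP; rewrite -sqrf_eq0; apply/eqP; move: r0 hr; rewrite /r; nra.
  have -> : y = x by rewrite yf [RHS]xf hX1 hX2 hY1 hY2.
  exact: Ex.
set C := (X1 * Y1 + X2 * Y2) / r. set S := (X1 * Y2 - X2 * Y1) / r.
have num : (X1 * Y1 + X2 * Y2) ^+ 2 + (X1 * Y2 - X2 * Y1) ^+ 2 = r * r.
  have -> : (X1 * Y1 + X2 * Y2) ^+ 2 + (X1 * Y2 - X2 * Y1) ^+ 2
     = (X1 ^+ 2 + X2 ^+ 2) * (Y1 ^+ 2 + Y2 ^+ 2) by ring.
  by rewrite hr.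
have hCS : C ^+ 2 + S ^+ 2 = 1.
  have -> : C ^+ 2 + S ^+ 2 = ((X1 * Y1 + X2 * Y2) ^+ 2 + (X1 * Y2 - X2 * Y1) ^+ 2) / (r * r).
    by rewrite /C /S; field.
  by rewrite num divff // mulf_neq0.
have [th [cth sth]] := angle_exists hCS.
have e1 : C * X1 - S * X2 = Y1.
  have -> : C * X1 - S * X2 = Y1 * (X1 ^+ 2 + X2 ^+ 2) / r by rewrite /C /S; field.
  by rewrite -/r mulfK.
have e2 : S * X1 + C * X2 = Y2.
  have -> : S * X1 + C * X2 = Y2 * (X1 ^+ 2 + X2 ^+ 2) / r by rewrite /C /S; field.
  by rewrite -/r mulfK.
have -> : y = rotCS p1 p2 C S x.
  rewrite /rotCS -/X1 -/X2 yf [in RHS]xf.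
  apply/rowP => i; rewrite !mxE -e1 -e2; ring.
by rewrite -cth -sth; apply: Aall.
Qed.

End PlaneSym.
Section Base.
Variables (R : realType) (n : nat).
Implicit Types (x y z w u v : 'rV[R]_n) (E : set 'rV[R]_n).
Local Notation "<< x , y >>" := (dotv x y).

Lemma reflS u (k : R) x : k != 0 -> refl_line (k *: u) x = refl_line u x.
Proof.
move=> k0; have [u0|u0] := eqVneq << u, u >> 0.
  by rewrite (dotvv_eq0 u0) scaler0.
rewrite !reflE dotvZr !dotvZl dotvZr.
rewrite scalerA; congr (_ *: _ - _); field; by apply/andP.
Qed.

Lemma refl_unit u x : << u, u >> = 1 -> refl_line u x = (2 * << x, u >>) *: u - x.
Proof. by move=> uu; rewrite reflE uu divr1. Qed.

Lemma irr_transfer (c : R) : -1 <= c <= 1 ->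
  irrational_multiple_of_pi (acos `|c|) ->
  forall K N : int, N != 0 -> N%:~R * (2 * acos c) != K%:~R * (pi *+ 2).
Proof.
move=> hc hirr K N N0; apply/negP => /eqP h.
have hN : N%:~R != 0 :> R by rewrite intr_eq0.
have om : acos c = (K%:~R / N%:~R) * pi.
  apply: (@mulfI _ (2 * N%:~R)); first by rewrite mulf_neq0.
  rewrite [LHS](_ : _ = N%:~R * (2 * acos c)); last by ring.
  rewrite h mulr2n; field; exact: hN.
apply: hirr.
have [c0|c0] := leP 0 c.
  exists (K%:Q / N%:Q); rewrite ger0_norm // om fmorph_div !rmorph_int //.
exists (1 - K%:Q / N%:Q); rewrite ltr0_norm // acosN // om rmorphB rmorph1 fmorph_div !rmorph_int.
ring.
Qed.

End Base.
Section Base2.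
Variables (R : realType) (n : nat).
Implicit Types (x y z w u v : 'rV[R]_n) (E : set 'rV[R]_n).
Local Notation "<< x , y >>" := (dotv x y).

Lemma base_sym E a b : a != 0 -> b != 0 -> closed E ->
  (forall x, E x -> E (refl_line a x)) -> (forall x, E x -> E (refl_line b x)) ->
  irrational_multiple_of_pi (line_angle a b) ->
  << a, b >> ^+ 2 < << a, a >> * << b, b >> /\
  symm (fun v => exists s t : R, v = s *: a + t *: b) E.
Proof.
move=> a0 b0 cE hA hB hirr.
have aa0 := dotvv_gt0 a0. have bb0 := dotvv_gt0 b0.
set na := normv a. set nb := normv b.
have na0 : 0 < na by rewrite /na /normv sqrtr_gt0.
have nb0 : 0 < nb by rewrite /nb /normv sqrtr_gt0.
have na2 : na ^+ 2 = << a, a >> by rewrite /na /normv sqr_sqrtr // ltW.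
have nb2 : nb ^+ 2 = << b, b >> by rewrite /nb /normv sqr_sqrtr // ltW.
have na0' : na != 0 by exact: lt0r_neq0.
have nb0' : nb != 0 by exact: lt0r_neq0.
pose ah := na^-1 *: a. pose bh := nb^-1 *: b.
have aE : a = na *: ah by rewrite /ah scalerA mulfV // scale1r.
have bE : b = nb *: bh by rewrite /bh scalerA mulfV // scale1r.
have aa1 : << ah, ah >> = 1 by rewrite /ah dotvZl dotvZr -na2; field.
have bb1 : << bh, bh >> = 1 by rewrite /bh dotvZl dotvZr -nb2; field.
clearbody ah bh.
set c := << ah, bh >>.
have cab : << a, b >> = na * nb * c by rewrite aE bE dotvZl dotvZr -/c; ring.
have c2le : c ^+ 2 <= 1.
  have := dotvv_ge0 (ah - c *: bh).
  rewrite !(dotvBl, dotvBr, dotvZl, dotvZr) aa1 bb1 (dotvC bh ah) -/c; lra.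
have angE : line_angle a b = acos `|c|.
  rewrite /line_angle -/na -/nb cab normrM ger0_norm; last by rewrite mulr_ge0 // ltW.
  congr acos; field; exact/andP.
have c2lt : c ^+ 2 < 1.
  rewrite lt_neqAle c2le andbT; apply/eqP => c21.
  apply: hirr; exists 0; rewrite angE rmorph0 mul0r.
  have : `|c| = 1.
    have h0 : `|c| ^+ 2 = 1 by rewrite real_normK ?num_real.
    have h1 : 0 <= `|c| by [].
    nra.
  by move=> ->; rewrite acos1.
split.
  rewrite cab -na2 -nb2.
  have : 0 < (na * nb) ^+ 2 by rewrite exprn_gt0 // mulr_gt0.
  nra.
have hc : -1 <= c <= 1 by apply/andP; split; nra.
set s := Num.sqrt (1 - c ^+ 2).
have s0 : 0 < s by rewrite /s sqrtr_gt0 subr_gt0.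
have s0' : s != 0 by exact: lt0r_neq0.
have s2 : s ^+ 2 = 1 - c ^+ 2 by rewrite /s sqr_sqrtr // subr_ge0 ltW.
have ss : s * s = 1 - c * c by rewrite -expr2 s2 expr2.
have cc : c * c = 1 - s * s by rewrite ss; ring.
pose p1 := bh. pose p2 := s^-1 *: (ah - c *: bh).
have h11 : << p1, p1 >> = 1 by [].
have h12 : << p1, p2 >> = 0.
  by rewrite /p2 /p1 dotvZr dotvBr dotvZr bb1 (dotvC bh ah) -/c mulr1 subrr mulr0.
have h22 : << p2, p2 >> = 1.
  rewrite /p2 dotvZl dotvZr !(dotvBl, dotvBr, dotvZl, dotvZr) aa1 bb1 (dotvC bh ah) -/c.
  rewrite mulrA -expr2 exprVn s2; field.
  by rewrite subr_eq0 eq_sym; apply/negP => /eqP h; move: c2lt; rewrite h ltxx.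
have ahE : ah = c *: p1 + s *: p2.
  by rewrite /p2 /p1 scalerA mulfV // scale1r addrC subrK.
have p1E : bh = p1 by [].
clearbody p1 p2.
have xah : forall x, << x, ah >> = c * << x, p1 >> + s * << x, p2 >>.
  by move=> x; rewrite ahE dotvDr !dotvZr.
have reflA : forall x, refl_line a x = (2 * << x, ah >>) *: ah - x.
  by move=> x; rewrite aE reflS // refl_unit.
have reflB : forall x, refl_line b x = (2 * << x, p1 >>) *: p1 - x.
  by move=> x; rewrite bE reflS // p1E refl_unit.
set om := acos c.
have com : cos om = c by apply: acosK; rewrite in_itv /= hc.
have som : sin om = s by rewrite /om sin_acos.
have Ce : cos (2 * om) = c * c - s * s.
  by rewrite (_ : 2 * om = om + om); [rewrite cosD com som | ring].
have Se : sin (2 * om) = s * c + c * s.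
  by rewrite (_ : 2 * om = om + om); [rewrite sinD com som | ring].
have key1 : forall x, refl_line a (refl_line b x) = rotCS p1 p2 (cos (2 * om)) (sin (2 * om)) x.
  move=> x; rewrite reflA reflB xah !(dotvBl, dotvZl) h11 h12.
  have f1 : 2 * (c * (2 * << x, p1 >> * 1 - << x, p1 >>) + s * (2 * << x, p1 >> * 0 - << x, p2 >>)) * c
      - 2 * << x, p1 >> = (cos (2 * om) - 1) * << x, p1 >> - sin (2 * om) * << x, p2 >>.
    by rewrite Ce Se ss; ring.
  have f2 : 2 * (c * (2 * << x, p1 >> * 1 - << x, p1 >>) + s * (2 * << x, p1 >> * 0 - << x, p2 >>)) * s
      = sin (2 * om) * << x, p1 >> + (cos (2 * om) - 1) * << x, p2 >>.
    by rewrite Ce Se cc; ring.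
  rewrite /rotCS -f1 -f2 ahE; apply/rowP => i; rewrite !mxE.
  move: (<< x, p1 >>) (<< x, p2 >>) => X1 X2; ring.
have key2 : forall x, refl_line b (refl_line a x) =
    rotCS p1 p2 (cos (- (2 * om))) (sin (- (2 * om))) x.
  move=> x; rewrite reflB reflA !(dotvBl, dotvZl) (dotvC ah p1) (xah p1) (xah x) h11 h12 cosN sinN.
  have g1 : 2 * (2 * (c * << x, p1 >> + s * << x, p2 >>) * (c * 1 + s * 0) - << x, p1 >>)
      - 2 * (c * << x, p1 >> + s * << x, p2 >>) * c
      = (cos (2 * om) - 1) * << x, p1 >> - - sin (2 * om) * << x, p2 >>.
    by rewrite Ce Se ss; ring.
  have g2 : - (2 * (c * << x, p1 >> + s * << x, p2 >>) * s)
      = - sin (2 * om) * << x, p1 >> + (cos (2 * om) - 1) * << x, p2 >>.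
    by rewrite Ce Se cc; ring.
  rewrite /rotCS -g1 -g2 ahE; apply/rowP => i; rewrite !mxE.
  move: (<< x, p1 >>) (<< x, p2 >>) => X1 X2; ring.
have hP := plane_sym h11 h22 h12 cE
  (fun x Ex => eq_ind _ E (hA _ (hB _ Ex)) _ (key1 x))
  (fun x Ex => eq_ind _ E (hB _ (hA _ Ex)) _ (key2 x))
  (irr_transfer hc (eq_ind _ _ hirr _ angE)).
apply: symm_sub hP => v [s' [t' ->]].
exists (s' * na * c + t' * nb), (s' * na * s).
rewrite aE bE p1E ahE; apply/rowP => i; rewrite !mxE; ring.
Qed.

End Base2.
Definition spanS {R : realType} {n : nat} (u : 'I_n -> 'rV[R]_n) (S : {set 'I_n}) : set 'rV[R]_n :=
  fun v => exists c : 'I_n -> R, (forall k, k \notin S -> c k = 0) /\ v = \sum_k c k *: u k.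

Section Span.
Variables (R : realType) (n : nat) (u : 'I_n -> 'rV[R]_n).
Implicit Types (x y z w v : 'rV[R]_n) (E U : set 'rV[R]_n).
Implicit Types (S : {set 'I_n}) (i j : 'I_n).
Local Notation "<< x , y >>" := (dotv x y).

Lemma spanS_subsp S : subsp (spanS u S).
Proof.
split.
- exists (fun _ => 0); split => //; by rewrite big1 // => k _; rewrite scale0r.
- move=> x y [c [hc ->]] [d [hd ->]]; exists (fun k => c k + d k); split.
    by move=> k kS; rewrite hc // hd // addr0.
  by rewrite -big_split; apply: eq_bigr => k _; rewrite scalerDl.
- move=> t x [c [hc ->]]; exists (fun k => t * c k); split.
    by move=> k kS; rewrite hc // mulr0.
  by rewrite scaler_sumr; apply: eq_bigr => k _; rewrite scalerA.
Qed.

Lemma spanS_mem S i : i \in S -> spanS u S (u i).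
Proof.
move=> iS; exists (fun k => if k == i then 1 else 0); split.
  by move=> k kS; case: eqP => // ki; move: kS; rewrite ki iS.
rewrite (bigD1 i) //= eqxx scale1r big1 ?addr0 // => k /negbTE ->; by rewrite scale0r.
Qed.

Lemma spanS_U1 S j : spanS u (j |: S) = addline (spanS u S) (u j).
Proof.
apply/funext => v; apply/propext; split.
  move=> [c [hc ->]].
  exists (\sum_k (if k == j then 0 else c k) *: u k), (c j); split.
    exists (fun k => if k == j then 0 else c k); split => //.
    move=> k kS; case: eqP => // /eqP kj; apply: hc.
    by rewrite in_setU1 negb_or kj.
  rewrite (bigD1 j) //= [X in _ = X + _](bigD1 j) //= eqxx scale0r add0r addrC.
  by congr (_ + _); apply: eq_bigr => k /negbTE ->.
move=> [w [t [[c [hc ->]] ->]]].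
exists (fun k => c k + (if k == j then t else 0)); split.
  move=> k; rewrite in_setU1 negb_or => /andP[kj kS].
  by rewrite hc // (negbTE kj) addr0.
rewrite [RHS](_ : _ = \sum_k (c k *: u k + (if k == j then t else 0) *: u k)); last first.
  by apply: eq_bigr => k _; rewrite scalerDl.
rewrite big_split /=; congr (_ + _).
rewrite (bigD1 j) //= eqxx big1 ?addr0 // => k /negbTE ->; by rewrite scale0r.
Qed.

Lemma spanS_set0 v : spanS u finset.set0 v -> v = 0.
Proof.
move=> [c [hc ->]]; rewrite big1 // => k _. by rewrite hc ?scale0r // inE.
Qed.

Lemma hasproj_set0 : hasproj (spanS u finset.set0).
Proof.
move=> x; exists 0; split; first by case: (spanS_subsp finset.set0).
move=> w /spanS_set0 ->; exact: dotv0r.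
Qed.

End Span.

Section Proj.
Variables (R : realType) (n : nat).
Implicit Types (x y z w v u : 'rV[R]_n) (E U : set 'rV[R]_n).
Local Notation "<< x , y >>" := (dotv x y).

Lemma hasproj_step U u : subsp U -> hasproj U -> hasproj (addline U u).
Proof.
move=> hU hP x.
have [U0 hD hZ] := hU.
have [pu [Upu hpu]] := hP u.
have [q [Uq hq]] := hP x.
set wv := u - pu.
set lam := << x - q, wv >> / << wv, wv >>.
have key : << x - q, wv >> - lam * << wv, wv >> = 0.
  have [w0|w0] := eqVneq << wv, wv >> 0.
    by rewrite w0 mulr0 subr0 (dotvv_eq0 w0) dotv0r.
  by rewrite /lam mulfVK // subrr.
exists (q + lam *: wv); split.
  exists (q - lam *: pu), lam; split.
    by apply: subspB => //; apply: hZ.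
  by rewrite /wv; apply/rowP => i; rewrite !mxE; ring.
move=> w' [w [t [Uw ->]]].
have wvU : forall w, U w -> << wv, w >> = 0 by move=> w1 Uw1; rewrite hpu.
have uE : u = pu + wv by rewrite /wv addrC subrK.
have -> : x - (q + lam *: wv) = (x - q) - lam *: wv by rewrite opprD addrA.
move: key hq; set d := x - q => key hq.
clearbody wv d.
have h1 : << d - lam *: wv, w >> = 0.
  by rewrite dotvBl hq // dotvZl wvU // mulr0 subr0.
have h2 : << d - lam *: wv, u >> = 0.
  rewrite uE !dotvDr !dotvBl hq // !dotvZl (wvU pu Upu) mulr0 subr0 add0r.
  by rewrite -key.
by rewrite dotvDr dotvZr h1 h2 mulr0 addr0.
Qed.

End Proj.
Unset Implicit Arguments.

Theorem theorem3p2 (R : realType) (n : nat) (hn : (2 <= n)%N)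
  (u : 'I_n -> 'rV[R]_n) (hu : forall j, u j != 0)
  (h_irr : exists i j : 'I_n, irrational_multiple_of_pi (line_angle (u i) (u j)))
  (h_span : forall x : 'rV[R]_n,
      exists c : 'I_n -> R, x = \sum_(j < n) c j *: u j)
  (h_irred : forall S : {set 'I_n}, S != finset.set0 -> ~: S != finset.set0 ->
      exists i j, [/\ i \in S, j \notin S & dotv (u i) (u j) != 0])
  (E : set 'rV[R]_n)
  (hEsub : E `<=` @sphere R n) (hE0 : E !=set0) (hEcl : closed E)
  (hEinv : forall j, refl_line (u j) @` E = E) :
  E = @sphere R n.
Proof.
have hR : forall j x, E x -> E (refl_line (u j) x).
  by move=> j x Ex; rewrite -(hEinv j); exists x.
have [i0 [j0 hirr]] := h_irr.
have [cs hb] := base_sym (hu i0) (hu j0) hEcl (hR i0) (hR j0) hirr.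
have S1 : spanS u [set j0] = addline (spanS u finset.set0) (u j0).
  by rewrite -spanS_U1 finset.setU0.
have S2 : spanS u [set i0; j0] = addline (spanS u [set j0]) (u i0) by rewrite spanS_U1.
have hS0 : symm (spanS u [set i0; j0]) E.
  apply: symm_sub hb; rewrite S2 S1 => v [w [t [[w' [t' [/spanS_set0 -> ->]]] ->]]].
  by exists t, t'; rewrite add0r addrC.
have hp1 : hasproj (spanS u [set j0]).
  by rewrite S1; apply: hasproj_step; [exact: spanS_subsp | exact: hasproj_set0].
have hp0 : hasproj (spanS u [set i0; j0]).
  by rewrite S2; apply: hasproj_step; [exact: spanS_subsp | exact: hp1].
have hdim : forall S : {set 'I_n}, i0 \in S -> j0 \in S ->
    forall f, exists a, spanS u S a /\ a != 0 /\ dotv a f = 0.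
  move=> S iS jS f.
  have [Sp0 SpD SpZ] := spanS_subsp u S.
  have [af|af] := eqVneq (dotv (u i0) f) 0.
    by exists (u i0); split; [exact: spanS_mem | split].
  exists (dotv (u j0) f *: u i0 - dotv (u i0) f *: u j0); split.
    by apply: subspB; [exact: spanS_subsp | apply: SpZ; exact: spanS_mem
      | apply: SpZ; exact: spanS_mem].
  split; last by rewrite dotvBl !dotvZl mulrC subrr.
  apply/eqP => h0.
  have e1 := congr1 (fun v => dotv v (u i0)) h0.
  have e2 := congr1 (fun v => dotv v (u j0)) h0.
  rewrite /= dotvBl !dotvZl dotv0l in e1.
  rewrite /= dotvBl !dotvZl dotv0l in e2.
  move: e1 e2 cs af; rewrite (dotvC (u j0) (u i0)).
  move: (dotv (u j0) f) (dotv (u i0) f) (dotv (u i0) (u i0)) (dotv (u j0) (u j0))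
    (dotv (u i0) (u j0)) => al be A B C e1 e2 cs af.
  have : be * (A * B - C ^+ 2) = C * (al * A - be * C) - A * (al * C - be * B) by ring.
  rewrite e1 e2 !mulr0 subr0 => /eqP; rewrite mulf_eq0 (negbTE af) /= subr_eq0 => /eqP h.
  by move: cs; rewrite h ltxx.
have main : forall k (S : {set 'I_n}), (#|~: S| <= k)%N -> i0 \in S -> j0 \in S ->
    symm (spanS u S) E -> hasproj (spanS u S) -> symm (spanS u [set: 'I_n]) E.
  elim=> [|k IH] S hk iS jS hS hP.
    have : ~: S == finset.set0 by rewrite -cards_eq0 -leqn0.
    by move/eqP => hc; rewrite -(finset.setCK S) hc finset.setC0 in hS.
  have [hc|hc] := eqVneq (~: S) finset.set0.
    by rewrite -(finset.setCK S) hc finset.setC0 in hS.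
  have hSn : S != finset.set0 by apply/set0Pn; exists i0.
  have [i' [j' [i'S j'S hij]]] := h_irred S hSn hc.
  apply: (IH (j' |: S)).
  - have h1 := cardsC S; have h2 := cardsC (j' |: S).
    rewrite cardsU1 j'S /= in h2.
    move: hk h1 h2; move: #|S| #|~: S| #|~: (j' |: S)| #|'I_n| => a b c d; lia.
  - by rewrite finset.setU1r.
  - by rewrite finset.setU1r.
  - rewrite spanS_U1; apply: merge => //.
    + exact: spanS_subsp.
    + exact: hR.
    + by exists (u i'); split; [exact: spanS_mem | rewrite dotvC].
    + exact: hdim.
  - by rewrite spanS_U1; apply: hasproj_step => //; exact: spanS_subsp.
have hT := main _ _ (leqnn _) (finset.setU11 _ _) (finset.setU1r _ (finset.set11 _)) hS0 hp0.
apply/funext => y; apply/propext; split; first exact: hEsub.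
move=> hy; have [x0 Ex0] := hE0.
apply: (hT x0 y Ex0).
  have [c hc] := h_span (y - x0).
  by exists c; split => // k; rewrite finset.in_setT.
by rewrite hy (hEsub _ Ex0).
Qed.
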